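(* Consider a linear pentapod of Type 1 or Type 2 with fixed geometric parameters $A\neq0$, $C$, $a_r$, $a_c\neq0$, $a_4$, and any leg parameters satisfying (SM1)–(SM2). For real $t$, let $\mathfrak p_t$ denote the point of $\mathfrak p$ with parameter $t$, and let $\mathbf P_t=\Big(\frac{A(a_r^2+a_c^2-ta_r)}{(t-a_r)^2+a_c^2},\,-\frac{Aa_ct}{(t-a_r)^2+a_c^2},\,\frac{Ca_4}{a_4-t}\Big)^T$. Let $\mathfrak C$ be the point $\mathbf P_c$ with $c=\frac{a_4^2-a_c^2-a_r^2}{2(a_4-a_r)}$ if $a_4\neq a_r$, and $\mathfrak C=\mathfrak M_5=(0,0,0)$ if $a_4=a_r$. Then for every $t\in\mathbb R\setminus\{a_4\}$, in every real pose of the self-motion the image of $\mathfrak p_t$ lies on the ellipsoid of rotation with center $\mathfrak C$, axis of rotation parallel to the $z$-axis of the fixed frame, semi-axis $|a_4-t|$ along this axis and equator radius $\sqrt{(a_r-t)^2+a_c^2}$; moreover $\mathfrak p_t$ runs on a sphere centered at $\mathbf P_t$ (a plane if $\mathbf P_t$ is ideal). For $t=a_4$, the image of $\mathfrak p_{a_4}$ lies in the plane $z=p_4$ on a circular disc centered at $\mathfrak C$. For $a_4\neq a_r$ the only one of these ellipsoids that is a sphere is the one for $t=c$; for $a_4=a_r$ none is a sphere.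
   Context: Euclidean displacements $\mathbf x\mapsto \mathbf R\mathbf x+\mathbf s$ (rows $\mathbf r_j$ of $\mathbf R$). Fixed frame: $\mathfrak M_5=(0,0,0)$, $\mathfrak M_1=(A,0,C)$, $A\ne0$; $\mathfrak M_2,\mathfrak M_3,\mathfrak M_4$ ideal points in directions $(1,i,0)^T,(1,-i,0)^T,(0,0,1)^T$. Platform line $\mathfrak p$: point with parameter $t$ is $\mathbf n+(t-a_r)\mathbf d$ ($\mathbf d$ unit vector); $\mathfrak m_j$ has parameter $a_j$ with $a_1=0$, $a_2=a_r+ia_c$, $a_3=a_r-ia_c$, $a_4\in\mathbb R$, $a_r,a_c\in\mathbb R$, $a_c\ne0$. Leg constraints: $\|\mathbf R\mathbf m_1+\mathbf s-\mathbf M_1\|^2=R_1^2$; $(s_1+\mathbf r_1\mathbf m_2)-i(s_2+\mathbf r_2\mathbf m_2)=p_2$; $(s_1+\mathbf r_1\mathbf m_3)+i(s_2+\mathbf r_2\mathbf m_3)=p_3$; $s_3+\mathbf r_3\mathbf m_4=p_4$; $(\mathbf R\mathbf d)\cdot(\mathbf s+\mathbf R(\mathbf n+(p_5-a_r)\mathbf d))=0$. With $v=a_2+a_3-2a_4$, $w=a_2a_3-a_4^2$, the self-motion conditions are (SM1) $p_2=\frac{Aa_3v}{(a_3-a_4)^2}$, $p_3=\frac{Aa_2v}{(a_2-a_4)^2}$, $p_4=-\frac{Ca_4v}{(a_2-a_4)(a_3-a_4)}$ and (SM2) $(a_2-a_4)^2(a_3-a_4)^2[2wp_5-vR_1^2-(2w-va_4)a_4]+vw^2(A^2+C^2)=0$;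 the self-motion is the one-parameter set of poses of $\mathfrak p$ satisfying all five constraints. Type 1: $a_4\ne0\ne C$; Type 2: $a_4=0=C$. *)

(* Defs.v *)
From Stdlib Require Import Reals Lra.
Open Scope R_scope.

Record V3 := mkV3 { vx : R ; vy : R ; vz : R }.

Definition dot (u v : V3) : R := vx u * vx v + vy u * vy v + vz u * vz v.
Definition vadd (u v : V3) : V3 := mkV3 (vx u + vx v) (vy u + vy v) (vz u + vz v).
Definition vsub (u v : V3) : V3 := mkV3 (vx u - vx v) (vy u - vy v) (vz u - vz v).
Definition vscale (k : R) (u : V3) : V3 := mkV3 (k * vx u) (k * vy u) (k * vz u).
Definition cross (u v : V3) : V3 :=
  mkV3 (vy u * vz v - vz u * vy v) (vz u * vx v - vx u * vz v) (vx u * vy v - vy u * vx v).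
Definition origin : V3 := mkV3 0 0 0.

Record Cx := mkC { re : R ; im : R }.
Definition RC (x : R) : Cx := mkC x 0.
Definition Ci : Cx := mkC 0 1.
Definition Cadd (z w : Cx) : Cx := mkC (re z + re w) (im z + im w).
Definition Csub (z w : Cx) : Cx := mkC (re z - re w) (im z - im w).
Definition Cmul (z w : Cx) : Cx :=
  mkC (re z * re w - im z * im w) (re z * im w + im z * re w).
Definition Cinv (z : Cx) : Cx :=
  mkC (re z / (re z ^ 2 + im z ^ 2)) (- im z / (re z ^ 2 + im z ^ 2)).
Definition Cdiv (z w : Cx) : Cx := Cmul z (Cinv w).

Record CV3 := mkCV3 { cvre : V3 ; cvim : V3 }.
Definition dotRC (r : V3) (m : CV3) : Cx := mkC (dot r (cvre m)) (dot r (cvim m)).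

Record Pose := mkPose { r1 : V3 ; r2 : V3 ; r3 : V3 ; sv : V3 }.

Definition is_rotation (P : Pose) : Prop :=
  dot (r1 P) (r1 P) = 1 /\ dot (r2 P) (r2 P) = 1 /\ dot (r3 P) (r3 P) = 1 /\
  dot (r1 P) (r2 P) = 0 /\ dot (r1 P) (r3 P) = 0 /\ dot (r2 P) (r3 P) = 0 /\
  dot (r1 P) (cross (r2 P) (r3 P)) = 1.

Definition rotate (P : Pose) (x : V3) : V3 :=
  mkV3 (dot (r1 P) x) (dot (r2 P) x) (dot (r3 P) x).
Definition image (P : Pose) (x : V3) : V3 := vadd (rotate P x) (sv P).

Definition platform_pt (n d : V3) (ar t : R) : V3 := vadd n (vscale (t - ar) d).
Definition platform_ptC (n d : V3) (ar : R) (tau : Cx) : CV3 :=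
  mkCV3 (vadd n (vscale (re tau - ar) d)) (vscale (im tau) d).

Definition a2C (ar ac : R) : Cx := mkC ar ac.
Definition a3C (ar ac : R) : Cx := mkC ar (- ac).

(* ---------- the five leg constraints; fixed frame M5 = 0, M1 = (A,0,C) ---------- *)
Definition self_motion (A C ar ac a4 : R) (n d : V3) (R1 : R) (p2 p3 : Cx) (p4 p5 : R)
  (P : Pose) : Prop :=
  let m1 := platform_pt n d ar 0 in
  let m2 := platform_ptC n d ar (a2C ar ac) in
  let m3 := platform_ptC n d ar (a3C ar ac) in
  let m4 := platform_pt n d ar a4 in
  let s := sv P in
  is_rotation P /\
  (let u := vsub (image P m1) (mkV3 A 0 C) in dot u u = R1 ^ 2) /\
  Csub (Cadd (RC (vx s)) (dotRC (r1 P) m2))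
       (Cmul Ci (Cadd (RC (vy s)) (dotRC (r2 P) m2))) = p2 /\
  Cadd (Cadd (RC (vx s)) (dotRC (r1 P) m3))
       (Cmul Ci (Cadd (RC (vy s)) (dotRC (r2 P) m3))) = p3 /\
  vz s + dot (r3 P) m4 = p4 /\
  dot (rotate P d) (vadd s (rotate P (platform_pt n d ar p5))) = 0.

Definition vC (ar ac a4 : R) : Cx :=
  Csub (Cadd (a2C ar ac) (a3C ar ac)) (RC (2 * a4)).
Definition wC (ar ac a4 : R) : Cx :=
  Csub (Cmul (a2C ar ac) (a3C ar ac)) (RC (a4 ^ 2)).
Definition Csq (z : Cx) : Cx := Cmul z z.

Definition SM1 (A C ar ac a4 : R) (p2 p3 : Cx) (p4 : R) : Prop :=
  let a2 := a2C ar ac in let a3 := a3C ar ac in let v := vC ar ac a4 in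
  p2 = Cdiv (Cmul (Cmul (RC A) a3) v) (Csq (Csub a3 (RC a4))) /\
  p3 = Cdiv (Cmul (Cmul (RC A) a2) v) (Csq (Csub a2 (RC a4))) /\
  RC p4 = Cdiv (Cmul (Cmul (RC (- C)) (RC a4)) v)
               (Cmul (Csub a2 (RC a4)) (Csub a3 (RC a4))).

Definition SM2 (A C ar ac a4 R1 p5 : R) : Prop :=
  let a2 := a2C ar ac in let a3 := a3C ar ac in
  let v := vC ar ac a4 in let w := wC ar ac a4 in
  Cadd
    (Cmul (Cmul (Csq (Csub a2 (RC a4))) (Csq (Csub a3 (RC a4))))
          (Csub (Csub (Cmul (RC 2) (Cmul w (RC p5))) (Cmul v (RC (R1 ^ 2))))
                (Cmul (Csub (Cmul (RC 2) w) (Cmul v (RC a4))) (RC a4))))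
    (Cmul (Cmul v (Csq w)) (RC (A ^ 2 + C ^ 2)))
  = RC 0.

Definition Ppt (A C ar ac a4 t : R) : V3 :=
  mkV3 (A * (ar ^ 2 + ac ^ 2 - t * ar) / ((t - ar) ^ 2 + ac ^ 2))
       (- (A * ac * t) / ((t - ar) ^ 2 + ac ^ 2))
       (C * a4 / (a4 - t)).

Definition cpar (ar ac a4 : R) : R := (a4 ^ 2 - ac ^ 2 - ar ^ 2) / (2 * (a4 - ar)).

Definition centre (A C ar ac a4 : R) : V3 :=
  if Req_EM_T a4 ar then origin else Ppt A C ar ac a4 (cpar ar ac a4).

Definition on_ellipsoid_rot (c : V3) (h r : R) (X : V3) : Prop :=
  ((vx X - vx c) ^ 2 + (vy X - vy c) ^ 2) / r ^ 2 + (vz X - vz c) ^ 2 / h ^ 2 = 1.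

Definition ellipsoid_is_sphere (h r : R) : Prop := h = r.

Definition dist2 (X Y : V3) : R := let u := vsub X Y in dot u u.

(* Main.v *)
Require Import Defs.
From Stdlib Require Import Reals Lra Psatz Classical.
Open Scope R_scope.

Lemma sq3 (x y z : R) : x^2 + y^2 + z^2 = 0 -> x = 0 /\ y = 0 /\ z = 0.
Proof. intros H. assert (0 <= x^2) by nra. assert (0 <= y^2) by nra. assert (0 <= z^2) by nra.
  repeat split; nra. Qed.

Lemma rot_norm (P : Pose) (x : V3) : is_rotation P ->
  dot (rotate P x) (rotate P x) = dot x x.
Proof.
  destruct P as [[a1 a2 a3] [b1 b2 b3] [c1 c2 c3] s]; destruct x as [x1 x2 x3].
  unfold is_rotation, dot, rotate, cross; simpl.
  intros [H1 [H2 [H3 [H4 [H5 [H6 H7]]]]]].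
  assert (H7b : b1*(c2*a3 - c3*a2) + b2*(c3*a1 - c1*a3) + b3*(c1*a2-c2*a1) = 1) by (rewrite <- H7; ring).
  assert (H7c : c1*(a2*b3 - a3*b2) + c2*(a3*b1 - a1*b3) + c3*(a1*b2-a2*b1) = 1) by (rewrite <- H7; ring).
  assert (E1 : (a1 - (b2*c3 - b3*c2))^2 + (a2 - (b3*c1 - b1*c3))^2 + (a3 - (b1*c2-b2*c1))^2 = 0).
  { transitivity ((a1*a1+a2*a2+a3*a3) - 2 * (a1*(b2*c3 - b3*c2) + a2*(b3*c1 - b1*c3) + a3*(b1*c2 - b2*c1))
      + ((b1*b1+b2*b2+b3*b3)*(c1*c1+c2*c2+c3*c3) - (b1*c1+b2*c2+b3*c3)^2)); [ring|].
    rewrite H1, H2, H3, H6, H7; ring. }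
  assert (E2 : (b1 - (c2*a3 - c3*a2))^2 + (b2 - (c3*a1 - c1*a3))^2 + (b3 - (c1*a2-c2*a1))^2 = 0).
  { transitivity ((b1*b1+b2*b2+b3*b3) - 2 * (b1*(c2*a3 - c3*a2) + b2*(c3*a1 - c1*a3) + b3*(c1*a2-c2*a1))
      + ((c1*c1+c2*c2+c3*c3)*(a1*a1+a2*a2+a3*a3) - (a1*c1+a2*c2+a3*c3)^2)); [ring|].
    rewrite H1, H2, H3, H5, H7b; ring. }
  assert (E3 : (c1 - (a2*b3 - a3*b2))^2 + (c2 - (a3*b1 - a1*b3))^2 + (c3 - (a1*b2-a2*b1))^2 = 0).
  { transitivity ((c1*c1+c2*c2+c3*c3) - 2 * (c1*(a2*b3 - a3*b2) + c2*(a3*b1 - a1*b3) + c3*(a1*b2-a2*b1))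
      + ((a1*a1+a2*a2+a3*a3)*(b1*b1+b2*b2+b3*b3) - (a1*b1+a2*b2+a3*b3)^2)); [ring|].
    rewrite H1, H2, H3, H4, H7c; ring. }
  apply sq3 in E1; apply sq3 in E2; apply sq3 in E3.
  destruct E1 as [K1 [K2 K3]]; destruct E2 as [L1 [L2 L3]]; destruct E3 as [M1 [M2 M3]].
  assert (I : (x1*x1+x2*x2+x3*x3) * (a1*(b2*c3 - b3*c2) + a2*(b3*c1 - b1*c3) + a3*(b1*c2 - b2*c1))
    = (a1*x1+a2*x2+a3*x3)*(x1*(b2*c3 - b3*c2) + x2*(b3*c1 - b1*c3) + x3*(b1*c2 - b2*c1))
    + (b1*x1+b2*x2+b3*x3)*(x1*(c2*a3 - c3*a2) + x2*(c3*a1 - c1*a3) + x3*(c1*a2-c2*a1))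
    + (c1*x1+c2*x2+c3*x3)*(x1*(a2*b3 - a3*b2) + x2*(a3*b1 - a1*b3) + x3*(a1*b2-a2*b1))) by ring.
  rewrite H7 in I.
  replace (b2*c3 - b3*c2) with a1 in I by lra.
  replace (b3*c1 - b1*c3) with a2 in I by lra.
  replace (b1*c2 - b2*c1) with a3 in I by lra.
  replace (c2*a3 - c3*a2) with b1 in I by lra.
  replace (c3*a1 - c1*a3) with b2 in I by lra.
  replace (c1*a2-c2*a1) with b3 in I by lra.
  replace (a2*b3 - a3*b2) with c1 in I by lra.
  replace (a3*b1 - a1*b3) with c2 in I by lra.
  replace (a1*b2-a2*b1) with c3 in I by lra.
  unfold dot; simpl. lra.
Qed.

Lemma image_pt (P : Pose) n d ar t :
  image P (platform_pt n d ar t) =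
  mkV3 (vx (image P n) + (t - ar) * vx (rotate P d))
       (vy (image P n) + (t - ar) * vy (rotate P d))
       (vz (image P n) + (t - ar) * vz (rotate P d)).
Proof.
  destruct P as [[a1 a2 a3] [b1 b2 b3] [c1 c2 c3] [s1 s2 s3]]; destruct n as [n1 n2 n3];
  destruct d as [d1 d2 d3]. unfold image, platform_pt, rotate, vadd, vscale, dot; simpl.
  f_equal; ring.
Qed.

Lemma pose_facts A C ar ac a4 n d R1 p2 p3 p4 p5 (P : Pose) :
  dot d d = 1 -> self_motion A C ar ac a4 n d R1 p2 p3 p4 p5 P ->
  let N := image P n in let D := rotate P d in
  vx D ^ 2 + vy D ^ 2 + vz D ^ 2 = 1 /\
  vx N + ac * vy D = re p2 /\ vy N - ac * vx D = - im p2 /\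
  vz N + (a4 - ar) * vz D = p4 /\
  vx D * vx N + vy D * vy N + vz D * vz N + (p5 - ar) = 0 /\
  (vx N - ar * vx D - A) ^ 2 + (vy N - ar * vy D) ^ 2 + (vz N - ar * vz D - C) ^ 2 = R1 ^ 2.
Proof.
  intros Hd [Hrot [H1 [H2 [H3 [H4 H5]]]]] N D.
  assert (HD : dot D D = 1) by (unfold D; rewrite rot_norm; auto).
  revert HD H1 H2 H3 H4 H5. unfold N, D. clear N D Hrot.
  destruct P as [[a1 a2 a3] [b1 b2 b3] [c1 c2 c3] [s1 s2 s3]]; destruct n as [n1 n2 n3];
  destruct d as [d1 d2 d3].
  unfold image, platform_pt, platform_ptC, rotate, vadd, vscale, vsub, dot, dotRC, Csub, Cadd, Cmul, RC, Ci, a2C, a3C in *; simpl in *.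
  intros HD H1 H2 H3 H4 H5.
  subst p2 p4. simpl.
  unfold dot in *; simpl in *. repeat split; try ring.
  - match type of HD with ?L = _ => transitivity L; [ring | exact HD] end.
  - match type of H5 with ?L = 0 => match type of HD with ?DD = 1 =>
      transitivity (L - (p5 - ar)*(DD - 1)); [ring | rewrite H5, HD; ring] end end.
  - match type of H1 with ?L = _ => transitivity L; [ring | rewrite H1; ring] end.
Qed.

Definition Qf ar ac a4 := (a4 - ar)^2 + ac^2.
Definition alS A ar ac a4 := let b := a4 - ar in
  -2*A*b*(ar*(b^2-ac^2) - 2*b*ac^2)/(Qf ar ac a4)^2.
Definition beS A ar ac a4 := let b := a4 - ar in
  -2*A*b*ac*(b^2 - ac^2 + 2*ar*b)/(Qf ar ac a4)^2.
Definition p4S C ar ac a4 := 2*C*a4*(a4-ar)/Qf ar ac a4.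

Lemma Qpos ar ac a4 : ac <> 0 -> 0 < Qf ar ac a4.
Proof. intros H. unfold Qf.
 assert (0 < ac*ac).
 { destruct (Rtotal_order ac 0) as [h|[h|h]]; [nra| contradiction | nra]. }
 pose proof (pow2_ge_0 (a4 - ar)). assert (ac^2 = ac*ac) by ring. lra. Qed.

Lemma sm1_vals A C ar ac a4 p2 p3 p4 : ac <> 0 -> SM1 A C ar ac a4 p2 p3 p4 ->
  re p2 = alS A ar ac a4 /\ - im p2 = beS A ar ac a4 /\ p4 = p4S C ar ac a4.
Proof.
  intros Hac [E2 [_ E4]]. pose proof (Qpos ar ac a4 Hac) as HQ.
  apply (f_equal re) in E4. subst p2.
  unfold alS, beS, p4S, Qf in *.
  unfold Cdiv, Cmul, Cinv, Csq, Csub, Cadd, RC, a2C, a3C, vC in *; simpl in *.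
  rewrite E4.
  split; [|split]; field; split; intro Z; nra.
Qed.

Lemma centre_val A C ar ac a4 : ac <> 0 ->
  centre A C ar ac a4 = mkV3 (alS A ar ac a4) (beS A ar ac a4) (p4S C ar ac a4).
Proof.
  intros Hac. pose proof (Qpos ar ac a4 Hac) as HQ.
  unfold centre. destruct (Req_EM_T a4 ar) as [e|ne].
  - subst a4. unfold origin, alS, beS, p4S. f_equal; unfold Rdiv; ring.
  - assert (Hb : a4 - ar <> 0) by lra.
    unfold Ppt, cpar, alS, beS, p4S in *. unfold Qf in *.
    f_equal; field.
    all: repeat split; try lra; intro Z; nra.
Qed.

Lemma den_pos ar ac t : ac <> 0 -> 0 < (t - ar)^2 + ac^2.
Proof. intros H. assert (0 < ac*ac). { destruct (Rtotal_order ac 0) as [h|[h|h]]; [nra| contradiction | nra]. }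
 pose proof (pow2_ge_0 (t - ar)). assert (ac^2 = ac*ac) by ring. lra. Qed.

Lemma ell (ar ac a4 t al be p4 N1 N2 N3 D1 D2 D3 : R) : ac <> 0 -> t <> a4 ->
  D1^2+D2^2+D3^2 = 1 -> N1 + ac*D2 = al -> N2 - ac*D1 = be -> N3 + (a4-ar)*D3 = p4 ->
  ((N1 + (t-ar)*D1 - al)^2 + (N2 + (t-ar)*D2 - be)^2) / (sqrt((ar-t)^2+ac^2))^2
   + (N3 + (t-ar)*D3 - p4)^2/(Rabs(a4-t))^2 = 1.
Proof.
  intros Hac Ht HD H1 H2 H3.
  pose proof (den_pos ar ac t Hac) as Hp.
  rewrite pow2_sqrt by (pose proof (den_pos ar ac t Hac); replace ((ar-t)^2) with ((t-ar)^2) by ring; lra).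
  rewrite pow2_abs. rewrite <- H1, <- H2, <- H3.
  transitivity (D1^2+D2^2+D3^2); [|exact HD].
  assert (a4 - t <> 0) by lra.
  field. split; auto. replace ((ar-t)^2) with ((t-ar)^2) by ring. lra.
Qed.

Definition Kf A C ar ac a4 t p5 R1 :=
  let al := alS A ar ac a4 in let be := beS A ar ac a4 in let p4 := p4S C ar ac a4 in
  let P := Ppt A C ar ac a4 t in
  (al - vx P)^2 + (be - vy P)^2 + (p4 - vz P)^2 - 2*t*(p5-ar) - (al-A)^2 - be^2 - (p4-C)^2
  + R1^2 + t^2 - 2*t*ar.

Lemma core (A C ar ac a4 t p5 R1 D1 D2 D3 : R) : ac <> 0 -> t <> a4 ->
  let al := alS A ar ac a4 in let be := beS A ar ac a4 in let p4 := p4S C ar ac a4 in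
  let P := Ppt A C ar ac a4 t in
  D1^2+D2^2+D3^2 = 1 ->
  D1*(al - ac*D2) + D2*(be + ac*D1) + D3*(p4 - (a4-ar)*D3) + (p5 - ar) = 0 ->
  (al - ac*D2 - ar*D1 - A)^2 + (be + ac*D1 - ar*D2)^2 + (p4 - (a4-ar)*D3 - ar*D3 - C)^2 = R1^2 ->
  (al - ac*D2 + (t-ar)*D1 - vx P)^2 + (be + ac*D1 + (t-ar)*D2 - vy P)^2
    + (p4 - (a4-ar)*D3 + (t-ar)*D3 - vz P)^2 = Kf A C ar ac a4 t p5 R1.
Proof.
  intros Hac Ht al be p4 P HD H4 H5.
  match type of H4 with ?L = 0 => match type of H5 with ?M = _ =>
  match goal with |- ?G = ?K =>
  assert (Id : G - K = 2*t*L + (M - R1^2) + (t^2-2*t*ar)*(D1^2+D2^2+D3^2-1)) end end end.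
  { unfold Kf, al, be, p4, P, alS, beS, p4S, Ppt, Qf; simpl.
    pose proof (den_pos ar ac t Hac). pose proof (Qpos ar ac a4 Hac). unfold Qf in *.
    assert (a4 - t <> 0) by lra.
    field. repeat split; lra. }
  rewrite H4, H5, HD in Id. lra.
Qed.

Lemma dist_const A C ar ac a4 n d R1 p2 p3 p4 p5 (P : Pose) t :
  ac <> 0 -> t <> a4 -> dot d d = 1 -> SM1 A C ar ac a4 p2 p3 p4 ->
  self_motion A C ar ac a4 n d R1 p2 p3 p4 p5 P ->
  dist2 (image P (platform_pt n d ar t)) (Ppt A C ar ac a4 t) = Kf A C ar ac a4 t p5 R1.
Proof.
  intros Hac Ht Hd HS HP.
  destruct (sm1_vals _ _ _ _ _ _ _ _ Hac HS) as [Hal [Hbe Hp4]].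
  pose proof (pose_facts _ _ _ _ _ _ _ _ _ _ _ _ _ Hd HP) as F. cbv zeta in F.
  destruct F as [HD [E1 [E2 [E3 [E4 E5]]]]].
  rewrite Hal in E1. rewrite Hbe in E2. rewrite Hp4 in E3.
  rewrite image_pt.
  set (N1 := vx (image P n)) in *. set (N2 := vy (image P n)) in *. set (N3 := vz (image P n)) in *.
  set (D1 := vx (rotate P d)) in *. set (D2 := vy (rotate P d)) in *. set (D3 := vz (rotate P d)) in *.
  assert (e1 : N1 = alS A ar ac a4 - ac*D2) by lra.
  assert (e2 : N2 = beS A ar ac a4 + ac*D1) by lra.
  assert (e3 : N3 = p4S C ar ac a4 - (a4-ar)*D3) by lra.
  set (P1 := vx (Ppt A C ar ac a4 t)). set (P2 := vy (Ppt A C ar ac a4 t)). set (P3 := vz (Ppt A C ar ac a4 t)).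
  unfold dist2, vsub, dot. cbn [vx vy vz].
  rewrite e1, e2, e3 in *.
  rewrite <- (core A C ar ac a4 t p5 R1 D1 D2 D3 Hac Ht HD); [unfold P1, P2, P3; ring | lra | lra].
Qed.

Theorem mainTheorem2 (A C ar ac a4 : R) (n d : V3) (R1 p5 p4 : R) (p2 p3 : Cx) :
  A <> 0 -> ac <> 0 ->
  ((a4 <> 0 /\ C <> 0) \/ (a4 = 0 /\ C = 0)) ->
  dot d d = 1 ->
  SM1 A C ar ac a4 p2 p3 p4 ->
  SM2 A C ar ac a4 R1 p5 ->
  let SMo := self_motion A C ar ac a4 n d R1 p2 p3 p4 p5 in
  let Cc := centre A C ar ac a4 in
  (forall t : R, t <> a4 ->
     (forall P : Pose, SMo P ->
        on_ellipsoid_rot Cc (Rabs (a4 - t)) (sqrt ((ar - t) ^ 2 + ac ^ 2))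
          (image P (platform_pt n d ar t))) /\
     (exists rho : R, 0 <= rho /\
        forall P : Pose, SMo P ->
          dist2 (image P (platform_pt n d ar t)) (Ppt A C ar ac a4 t) = rho ^ 2)) /\
  (exists rho : R, 0 <= rho /\
     forall P : Pose, SMo P ->
       let X := image P (platform_pt n d ar a4) in
       vz X = p4 /\ (vx X - vx Cc) ^ 2 + (vy X - vy Cc) ^ 2 <= rho ^ 2) /\
  (a4 <> ar -> forall t : R, t <> a4 ->
     (ellipsoid_is_sphere (Rabs (a4 - t)) (sqrt ((ar - t) ^ 2 + ac ^ 2))
        <-> t = cpar ar ac a4)) /\
  (a4 = ar -> forall t : R, t <> a4 ->
     ~ ellipsoid_is_sphere (Rabs (a4 - t)) (sqrt ((ar - t) ^ 2 + ac ^ 2))).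
Proof.
  intros HA Hac Htype Hd HS HS2 SMo Cc.
  destruct (sm1_vals _ _ _ _ _ _ _ _ Hac HS) as [Hal [Hbe Hp4]].
  assert (HCc : Cc = mkV3 (alS A ar ac a4) (beS A ar ac a4) (p4S C ar ac a4))
    by (apply centre_val; auto).
  pose proof (Qpos ar ac a4 Hac) as HQ.
  split; [|split; [|split]].
  - intros t Ht. split.
    + intros P HP.
      pose proof (pose_facts _ _ _ _ _ _ _ _ _ _ _ _ _ Hd HP) as F. cbv zeta in F.
      destruct F as [HD [E1 [E2 [E3 [E4 E5]]]]].
      rewrite Hal in E1. rewrite Hbe in E2. rewrite Hp4 in E3.
      unfold on_ellipsoid_rot. rewrite image_pt, HCc. cbn [vx vy vz].
      eapply ell; eauto.
    + destruct (classic (exists P, SMo P)) as [[P0 HP0]|Hno].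
      * exists (sqrt (Kf A C ar ac a4 t p5 R1)).
        assert (HK : 0 <= Kf A C ar ac a4 t p5 R1).
        { rewrite <- (dist_const A C ar ac a4 n d R1 p2 p3 p4 p5 P0 t); auto.
          unfold dist2, dot. nra. }
        split; [apply sqrt_pos|].
        intros P HP. rewrite pow2_sqrt by exact HK.
        apply (dist_const A C ar ac a4 n d R1 p2 p3 p4 p5 P t); auto.
      * exists 0. split; [lra|]. intros P HP. exfalso. apply Hno. exists P. exact HP.
  - exists (sqrt (Qf ar ac a4)). split; [apply sqrt_pos|].
    intros P HP X.
    pose proof (pose_facts _ _ _ _ _ _ _ _ _ _ _ _ _ Hd HP) as F. cbv zeta in F.
    destruct F as [HD [E1 [E2 [E3 [E4 E5]]]]].
    rewrite Hal in E1. rewrite Hbe in E2. rewrite Hp4 in E3.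
    rewrite pow2_sqrt by lra.
    unfold X. rewrite image_pt, HCc. cbn [vx vy vz].
    set (N1 := vx (image P n)) in *. set (N2 := vy (image P n)) in *. set (N3 := vz (image P n)) in *.
    set (D1 := vx (rotate P d)) in *. set (D2 := vy (rotate P d)) in *. set (D3 := vz (rotate P d)) in *.
    split.
    + rewrite Hp4. lra.
    + assert (e1 : N1 = alS A ar ac a4 - ac*D2) by lra.
      assert (e2 : N2 = beS A ar ac a4 + ac*D1) by lra.
      rewrite e1, e2.
      replace ((alS A ar ac a4 - ac * D2 + (a4 - ar) * D1 - alS A ar ac a4) ^ 2 +
               (beS A ar ac a4 + ac * D1 + (a4 - ar) * D2 - beS A ar ac a4) ^ 2)
        with (Qf ar ac a4 * (D1^2 + D2^2)) by (unfold Qf; ring).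
      assert (0 <= D3^2) by apply pow2_ge_0.
      assert (D1^2 + D2^2 <= 1) by lra.
      rewrite <- (Rmult_1_r (Qf ar ac a4)) at 2.
      apply Rmult_le_compat_l; lra.
  - intros Hne t Ht. unfold ellipsoid_is_sphere.
    assert (Hp : 0 <= (ar - t)^2 + ac^2) by (pose proof (den_pos ar ac t Hac);
      replace ((ar-t)^2) with ((t-ar)^2) by ring; lra).
    split.
    + intros Heq.
      assert (Hsq : (a4 - t)^2 = (ar - t)^2 + ac^2).
      { rewrite <- pow2_abs, Heq, pow2_sqrt by exact Hp. reflexivity. }
      unfold cpar. assert (a4 - ar <> 0) by lra.
      apply (Rmult_eq_reg_l (2 * (a4 - ar))); [|lra].
      field_simplify; [|lra]. nra.
    + intros ->. rewrite <- (sqrt_pow2 (Rabs _)) by apply Rabs_pos.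
      rewrite pow2_abs. f_equal. unfold cpar. field. lra.
  - intros Heq t Ht Hsph. unfold ellipsoid_is_sphere in Hsph.
    assert (Hp : 0 <= (ar - t)^2 + ac^2) by (pose proof (den_pos ar ac t Hac);
      replace ((ar-t)^2) with ((t-ar)^2) by ring; lra).
    assert (Hsq : (a4 - t)^2 = (ar - t)^2 + ac^2).
    { rewrite <- pow2_abs, Hsph, pow2_sqrt by exact Hp. reflexivity. }
    subst a4. assert (ac * ac = 0) by nra.
    apply Hac. nra.
Qed.
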